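(* Let $n \geq 2$ be an integer and $A$ a finite set of size $q \geq 2$. Then \[ \operatorname{Rank}(\mathrm{CA}(\mathbb{Z}_n; A) : \mathrm{ICA}(\mathbb{Z}_n; A)) = \begin{cases} E(n) - 1, & \text{if } q=2 \text{ and } n \text{ is even}, \\ E(n), & \text{otherwise.} \end{cases} \]
   Context: A cellular automaton over $\mathbb{Z}_n$ and $A$ is a map $\tau: A^{\mathbb{Z}_n}\to A^{\mathbb{Z}_n}$ for which there exist a finite $S\subseteq\mathbb{Z}_n$ and $\mu:A^S\to A$ with $(g)(x)\tau = ((R_g\circ x)|_S)\mu$ for all $x$ and $g$, where $R_g\circ x$ is $h\mapsto x(h+g)$ (maps applied on the right); $\mathrm{CA}(\mathbb{Z}_n;A)$ is the semigroup of these under composition and $\mathrm{ICA}(\mathbb{Z}_n;A)$ is its group of units. For a finite semigroup $M$ and $U\subseteq M$, the relative rank $\operatorname{Rank}(M:U)$ is the minimum size of a subset $V\subseteq M$ such that $U\cup V$ generates $M$. $E(n) := |\{(s,t)\in\{1,\dots,n\}^2 : s\mid n,\ t\mid n,\ t\mid s\}|$. *)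

(* Defs.v *)
From HB Require Import structures.
From mathcomp Require Import all_boot all_order all_algebra.
Set Implicit Arguments. Unset Strict Implicit. Unset Printing Implicit Defensive.
Import GRing.Theory.
Local Open Scope ring_scope.

(* Configurations A^{Z_n}; 'Z_n is Z/nZ for n >= 2 (hypothesis n >= 2 in the theorem). *)
Definition config (n : nat) (A : finType) := {ffun 'Z_n -> A}.

Definition cmap (n : nat) (A : finType) := {ffun config n A -> config n A}.

Definition shift (n : nat) (A : finType) (g : 'Z_n) (x : config n A) : config n A :=
  [ffun h => x (h + g)].

(* A local map on A^S is
   represented as a map on A^{Z_n} depending only on the restriction to S. *)
Definition is_CA (n : nat) (A : finType) (tau : cmap n A) : Prop :=
  exists (S : {set 'Z_n}) (mu : config n A -> A),
    (forall x y : config n A, (forall s, s \in S -> x s = y s) -> mu x = mu y) /\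
    (forall (x : config n A) (g : 'Z_n), tau x g = mu (shift g x)).

Definition cid (n : nat) (A : finType) : cmap n A := [ffun x => x].

(* composition, maps applied on the right: x (tau sigma) = (x tau) sigma *)
Definition ccomp (n : nat) (A : finType) (tau sigma : cmap n A) : cmap n A :=
  [ffun x => sigma (tau x)].

Definition is_ICA (n : nat) (A : finType) (tau : cmap n A) : Prop :=
  is_CA tau /\ exists sigma, is_CA sigma /\
    ccomp tau sigma = cid n A /\ ccomp sigma tau = cid n A.

Inductive sgen (n : nat) (A : finType) (W : cmap n A -> Prop) : cmap n A -> Prop :=
  | sgen_base f : W f -> sgen W f
  | sgen_comp f g : sgen W f -> sgen W g -> sgen W (ccomp f g).

Definition generates (n : nat) (A : finType) (M U : cmap n A -> Prop) (V : {set cmap n A}) :=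
  forall f, M f <-> sgen (fun h => U h \/ h \in V) f.

Definition relative_rank_is (n : nat) (A : finType) (M U : cmap n A -> Prop) (r : nat) : Prop :=
  (exists V : {set cmap n A}, (forall f, f \in V -> M f) /\ generates M U V /\ #|V| = r) /\
  (forall V : {set cmap n A}, (forall f, f \in V -> M f) -> generates M U V -> (r <= #|V|)%N).

Definition E (n : nat) : nat :=
  (\sum_(1 <= s < n.+1) \sum_(1 <= t < n.+1) [&& s %| n, t %| n & t %| s])%N.

(* Main.v *)
Require Import Defs.
From mathcomp Require Import all_boot all_order all_algebra.
From mathcomp Require Import zify.
Set Implicit Arguments. Unset Strict Implicit. Unset Printing Implicit Defensive.
Import GRing.Theory.

Section S.
Variables (m : nat) (A : finType).
Local Notation N := m.+2.
Local Notation X := (config N A).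
Local Notation G := 'Z_N.

Lemma shiftE (g : G) (x : X) h : shift g x h = x (h + g)%R.
Proof. rewrite /shift ffunE. reflexivity. Qed.

Lemma shiftS (g k : G) (x : X) : shift g (shift k x) = shift (k + g)%R x.
Proof. by apply/ffunP=> h; rewrite !shiftE (addrC k) addrA. Qed.

Lemma shift0 (x : X) : shift 0%R x = x.
Proof. by apply/ffunP=> h; rewrite shiftE addr0. Qed.

Lemma shiftK (g : G) (x : X) : shift (- g)%R (shift g x) = x.
Proof. by rewrite shiftS subrr shift0. Qed.

Lemma shiftKV (g : G) (x : X) : shift g (shift (- g)%R x) = x.
Proof. by rewrite shiftS addrC subrr shift0. Qed.

Lemma shift_inj (g : G) : injective (@shift N A g).
Proof. exact: can_inj (shiftK g). Qed.

Definition equiv (f : cmap N A) := forall (g : G) x, f (shift g x) = shift g (f x).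

Lemma CA_equiv f : is_CA f <-> equiv f.
Proof.
split.
  move=> [S [mu [_ Hmu]]] g x; apply/ffunP=> h.
  by rewrite Hmu shiftE Hmu shiftS addrC.
move=> Hf; exists setT, (fun x => f x 0%R); split; first by move=> x y H; congr (f _ _); apply/ffunP=> s; apply: H; rewrite inE.
by move=> x g; rewrite Hf shiftE add0r.
Qed.

Lemma ccompE (f g : cmap N A) x : ccomp f g x = g (f x).
Proof. by rewrite /ccomp ffunE. Qed.

Lemma equiv_comp f g : equiv f -> equiv g -> equiv (ccomp f g).
Proof. by move=> Hf Hg k x; rewrite !ccompE Hf Hg. Qed.

Lemma ICA_equiv f : is_ICA f <-> equiv f /\ injective f.
Proof.
split.
  move=> [/CA_equiv Hf [s [_ [H1 H2]]]]; split=> //.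
  apply: (can_inj (g := s)) => x.
  by have := congr1 (fun h : cmap N A => h x) H1; rewrite ccompE /cid ffunE.
move=> [Hf Hi]; split; first by apply/CA_equiv.
pose s : cmap N A := [ffun y => invF Hi y].
have sE y : s y = invF Hi y by rewrite ffunE.
exists s; split; [apply/CA_equiv | split; apply/ffunP=> x; rewrite ccompE /cid ffunE].
- move=> k y; apply: (Hi); rewrite Hf !sE !f_invF //.
- by rewrite ffunE invF_f.
- by rewrite ffunE f_invF.
Qed.


Definition orb (x : X) : {set X} := [set shift g x | g : G].

Lemma orbP (x z : X) : reflect (exists g, z = shift g x) (z \in orb x).
Proof. by apply: (iffP imsetP) => [[g _ ->]|[g ->]]; exists g. Qed.

Lemma orb_shift g (x : X) : shift g x \in orb x.
Proof. by apply/orbP; exists g. Qed.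

Lemma orb_self (x : X) : x \in orb x.
Proof. by rewrite -{1}(shift0 x) orb_shift. Qed.

Lemma orb_shift_in g (x z : X) : (shift g z \in orb x) = (z \in orb x).
Proof.
apply/orbP/orbP=> [[k Hk]|[k ->]].
  by exists (k - g)%R; rewrite -[z](shiftK g) Hk shiftS.
by exists (k + g)%R; rewrite shiftS.
Qed.

Lemma orb_sym (x z : X) : z \in orb x -> x \in orb z.
Proof. by case/orbP=> g ->; apply/orbP; exists (- g)%R; rewrite shiftK. Qed.

Lemma orb_trans (x y z : X) : y \in orb x -> z \in orb y -> z \in orb x.
Proof. by case/orbP=> g -> /orbP [k ->]; rewrite orb_shift_in orb_shift_in orb_self. Qed.

Definition stabsub (x y : X) := forall g, shift g x = x -> shift g y = y.

Definition OM (a b : X) : cmap N A :=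
  [ffun z => if [pick g | z == shift g a] is Some g then shift g b else z].

Lemma OM_in a b g : stabsub a b -> OM a b (shift g a) = shift g b.
Proof.
move=> Hs; rewrite ffunE; case: pickP => [k /eqP Hk|/(_ g)]; last by rewrite eqxx.
have: shift (g - k)%R a = a.
  by rewrite -shiftS Hk shiftK.
move/Hs=> H; by rewrite -[in LHS]H shiftS subrK.
Qed.

Lemma OM_out a b z : z \notin orb a -> OM a b z = z.
Proof.
move=> Hz; rewrite ffunE; case: pickP => [k /eqP Hk|//].
by move: Hz; rewrite Hk orb_shift.
Qed.

Lemma OM_equiv a b : stabsub a b -> equiv (OM a b).
Proof.
move=> Hs g z; case Hz: (z \in orb a).
  case/orbP: Hz => k ->; by rewrite shiftS !OM_in // shiftS.
by rewrite !OM_out ?orb_shift_in ?Hz.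
Qed.

Definition Sw (a b : X) : cmap N A :=
  [ffun z => if z \in orb a then OM a b z else OM b a z].

Lemma SwE a b z : Sw a b z = if z \in orb a then OM a b z else OM b a z.
Proof. by rewrite ffunE. Qed.

Lemma Sw_equiv a b : stabsub a b -> stabsub b a -> equiv (Sw a b).
Proof.
move=> H1 H2 g z; rewrite !SwE orb_shift_in.
by case: ifP => _; rewrite ?(OM_equiv H1) ?(OM_equiv H2).
Qed.

Lemma SwK a b : stabsub a b -> stabsub b a -> forall z, Sw b a (Sw a b z) = z.
Proof.
move=> H1 H2 z; rewrite (SwE a).
case Hz: (z \in orb a).
  case/orbP: Hz => g ->; rewrite OM_in // SwE orb_shift_in orb_self.
  by rewrite OM_in.
case Hzb: (z \in orb b).
  case/orbP: Hzb => g Hg; rewrite Hg OM_in // SwE orb_shift_in.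
  case Hba: (b \in orb a).
    by move: Hz; rewrite Hg orb_shift_in (orb_trans _ Hba) // orb_self.
  case Hab: (a \in orb b); first by move: Hba; rewrite orb_sym.
  by rewrite OM_in.
rewrite OM_out ?Hzb // SwE Hzb OM_out ?Hz //.
Qed.

Lemma Sw_inj a b : stabsub a b -> stabsub b a -> injective (Sw a b).
Proof. by move=> H1 H2; apply: can_inj (SwK H1 H2). Qed.

Lemma Sw_a a b : stabsub a b -> Sw a b a = b.
Proof.
by move=> H; rewrite SwE orb_self -[X in OM _ _ X](shift0 a) OM_in // shift0.
Qed.

Lemma Sw_out a b z : z \notin orb a -> z \notin orb b -> Sw a b z = z.
Proof. by move=> H1 H2; rewrite SwE (negbTE H1) OM_out. Qed.


Lemma natZ (g : G) : ((val g)%:R)%R = g.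
Proof. exact: natr_Zp. Qed.

Lemma NZ : ((N%:R)%R : G) = 0%R.
Proof. by apply/val_inj; rewrite Zp_nat; exact: modnn. Qed.

Lemma shiftn (k j : nat) (x : X) : shift (k%:R)%R (shift (j%:R)%R x) = shift ((j + k)%:R)%R x.
Proof. by rewrite shiftS natrD. Qed.

Lemma shift_mul (k q : nat) (x : X) : shift (k%:R)%R x = x -> shift ((k * q)%:R)%R x = x.
Proof.
move=> H; elim: q => [|q IH]; first by rewrite muln0 shift0.
by rewrite mulnS -shiftn H IH.
Qed.

Section Per.
Variable x : X.
Let Pex : exists k, (0 < k) && (shift (k%:R)%R x == x).
Proof. by exists N; rewrite NZ shift0 eqxx. Qed.
Definition per0 := ex_minn Pex.

Lemma per0_spec : 0 < per0 /\ shift (per0%:R)%R x = x /\ forall k, 0 < k -> shift (k%:R)%R x = x -> per0 <= k.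
Proof.
rewrite /per0; case: ex_minnP => d /andP [H1 /eqP H2] H3; split=> //; split=> //.
by move=> k Hk Hx; apply: H3; rewrite Hk Hx eqxx.
Qed.

Lemma per0_dvd k : (shift (k%:R)%R x == x) = (per0 %| k).
Proof.
have [H1 [H2 H3]] := per0_spec.
apply/eqP/idP => [Hk|/dvdnP [q ->]]; last by rewrite mulnC shift_mul.
have Hm : shift ((k %% per0)%:R)%R x = x.
  apply: (@shift_inj ((per0 * (k %/ per0))%:R)%R).
  by rewrite shiftn addnC mulnC -divn_eq Hk mulnC shift_mul.
apply/eqP; case: (posnP (k %% per0)) => [//|Hpos].
by have := H3 _ Hpos Hm; rewrite leqNgt ltn_pmod.
Qed.

Lemma per0_N : per0 %| N.
Proof. by rewrite -per0_dvd NZ shift0. Qed.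

Lemma per0_stab (g : G) : (shift g x == x) = (per0 %| val g).
Proof. by rewrite -per0_dvd natZ. Qed.

Lemma card_orb : #|orb x| = per0.
Proof.
have [H1 [H2 H3]] := per0_spec.
have -> : orb x = [set shift ((val i)%:R)%R x | i : 'I_per0].
  apply/setP=> z; apply/orbP/imsetP => [[g ->]|[i _ ->]]; last by exists ((val i)%:R)%R.
  exists (Ordinal (ltn_pmod (val g) H1)) => //=.
  rewrite -[in shift g x](natZ g) {1}(divn_eq (val g) per0) -shiftn mulnC.
  by rewrite shift_mul.
rewrite card_imset ?card_ord // => i j /= Hij.
wlog lij : i j Hij / val i <= val j.
  by move=> W; case: (leqP (val i) (val j)) => [|/ltnW] l; [|apply/esym]; apply: W.
apply/val_inj/eqP; rewrite eqn_leq lij /=; apply/negP=> /negP; rewrite -ltnNge => lt.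
have : shift ((val j - val i)%:R)%R x = x.
  apply: (@shift_inj ((val i)%:R)%R); rewrite shiftn subnK ?(ltnW lt) //.
move=> Hs; have := H3 _ _ Hs; rewrite subn_gt0 => /(_ lt).
by rewrite leqNgt (leq_ltn_trans (leq_subr _ _) (ltn_ord j)).
Qed.
End Per.

Definition per (x : X) := #|orb x|.

Lemma per_dvd x k : (shift (k%:R)%R x == x) = (per x %| k).
Proof. by rewrite /per card_orb per0_dvd. Qed.

Lemma per_stab x (g : G) : (shift g x == x) = (per x %| val g).
Proof. by rewrite /per card_orb per0_stab. Qed.

Lemma per_N x : per x %| N.
Proof. by rewrite /per card_orb per0_N. Qed.

Lemma per_gt0 x : 0 < per x.
Proof. by rewrite /per card_orb; case: (per0_spec x). Qed.

Lemma per_le x : per x <= N.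
Proof. exact: dvdn_leq (per_N x). Qed.

Lemma stabsub_per x y : stabsub x y <-> per y %| per x.
Proof.
split=> [H|H g Hx].
  by rewrite -per_dvd; apply/eqP/H/eqP; rewrite per_dvd.
apply/eqP; rewrite per_stab; apply: dvdn_trans H _; rewrite -per_stab; exact/eqP.
Qed.

Lemma per_uniq x d : 0 < d -> (forall k, (shift (k%:R)%R x == x) = (d %| k)) -> per x = d.
Proof.
move=> Hd H; apply/eqP; rewrite eqn_dvd -H per_dvd dvdnn /= -per_dvd H dvdnn //.
Qed.

Lemma per_shift g x : per (shift g x) = per x.
Proof.
apply: per_uniq (per_gt0 x) _ => k.
by rewrite shiftS addrC -shiftS (inj_eq (@shift_inj _)) per_dvd.
Qed.


Definition inv1 (h : cmap N A) := #|[set: X]| - #|[set h z | z : X]|.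
Definition inv2 (h : cmap N A) := #|[set y : X | 1 < #|[set z | h z == y]|]|.

Lemma orb_disj x y z : y \notin orb x -> z \in orb y -> z \notin orb x.
Proof.
move=> Hy Hz; apply/negP=> Hzx; move: Hy; rewrite (orb_trans Hzx) //.
exact: orb_sym.
Qed.

Section Lower.
Variables (x0 y0 : X) (h : cmap N A).
Hypotheses (Hy0 : y0 \notin orb x0) (Hs : stabsub x0 y0) (Hh : equiv h)
  (Hni : exists a b, a != b /\ h a = h b)
  (HK : forall a b, h a = h b -> OM x0 y0 a = OM x0 y0 b).

Let O := orb x0.

Lemma inj_out a b : a \notin O -> b \notin O -> h a = h b -> a = b.
Proof. by move=> Ha Hb /HK; rewrite !OM_out. Qed.

Lemma ex_cross : exists a b, [/\ a \in O, b \notin O & h a = h b].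
Proof.
case: (boolP [exists a, exists b, [&& a \in O, b \notin O & h a == h b]]).
  by case/existsP=> a /existsP [b /and3P [H1 H2 /eqP H3]]; exists a, b.
move/negP=> Hd; exfalso.
have Hd' a b : a \in O -> b \notin O -> h a <> h b.
  move=> Ha Hb Hab; apply: Hd; apply/existsP; exists a; apply/existsP; exists b.
  by rewrite Ha Hb Hab eqxx.
case: Hni => a [b [Hab He]].
have [Ha Hb] : a \in O /\ b \in O.
  case Ha: (a \in O); case Hb: (b \in O) => //.
  - by case: (Hd' a b) => //; rewrite Hb.
  - by case: (Hd' b a) => //; rewrite Ha.
  - by move: Hab; rewrite (inj_out _ _ He) ?Ha ?Hb ?eqxx.
case/orbP: Ha => i Hi; case/orbP: Hb => j Hj.
set k := (j - i)%R.
set F := [set y : X | shift k y == y].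
set H := [set h z | z in ~: O].
have Hc : shift k (h x0) = h x0.
  apply: (@shift_inj i); rewrite shiftS /k subrK -!Hh -Hi -Hj; exact/esym.
have E1 : F :&: H = [set h z | z in F :\: O].
  apply/setP=> y; rewrite !inE; apply/andP/imsetP => [[/eqP Hy /imsetP [z Hz Hyz]]|[z]].
    exists z => //; rewrite !inE; rewrite inE in Hz; rewrite Hz /=.
    apply/eqP; apply: inj_out => //; first by rewrite /O orb_shift_in.
    by rewrite Hh -Hyz.
  rewrite !inE => /andP [Hz /eqP Hkz] ->; split; first by rewrite -Hh Hkz.
  by apply/imsetP; exists z; rewrite // inE.
have E2 : #|F :&: H| = #|F :\: O|.
  rewrite E1 card_in_imset // => u v; rewrite !inE => /andP [Hu _] /andP [Hv _].
  exact: inj_out.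
have Hc2 : h x0 \in F :\: H.
  rewrite !inE Hc eqxx andbT; apply/imsetP=> [[z Hz Hzz]].
  by apply: (Hd' x0 z) => //; [exact: orb_self | rewrite inE in Hz].
have : 0 < #|F :&: O|.
  have E3 := cardsID H F; have E4 := cardsID O F.
  rewrite E2 in E3; have -> : #|F :&: O| = #|F :\: H| by apply/eqP; rewrite -(eqn_add2r #|F :\: O|) E4 addnC E3.
  by apply/card_gt0P; exists (h x0).
case/card_gt0P=> z; rewrite !inE => /andP [/eqP Hz /orbP [l Hl]].
have Hk : shift k x0 = x0.
  apply: (@shift_inj l); rewrite shiftS addrC -shiftS -Hl; exact: Hz.
move: Hab; rewrite Hi Hj.
have -> : j = (k + i)%R by rewrite /k subrK.
by rewrite -shiftS Hk eqxx.
Qed.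

Lemma hx0y0 : h x0 = h y0.
Proof.
have [a [b [Ha Hb Hab]]] := ex_cross.
have := HK Hab; rewrite (OM_out _ Hb).
case/orbP: Ha Hab => i -> Hab; rewrite OM_in // => Hb'.
apply: (@shift_inj i); rewrite -!Hh Hab Hb'.
done.
Qed.

Lemma im_h : [set h z | z : X] = [set h z | z in ~: O].
Proof.
apply/setP=> y; apply/imsetP/imsetP => [[z _ ->]|[z _ ->]]; last by exists z.
case Hz: (z \in O); last by exists z; rewrite // inE Hz.
case/orbP: Hz => i ->; exists (shift i y0); first by rewrite inE orb_shift_in.
by rewrite !Hh hx0y0.
Qed.

Lemma inv1_val : inv1 h = per x0.
Proof.
rewrite /inv1 im_h card_in_imset; last first.
  by move=> u v; rewrite !inE => Hu Hv; exact: inj_out.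
by rewrite cardsT -(cardsC O) addnK.
Qed.

Lemma inv2_val : inv2 h = per y0.
Proof.
rewrite /inv2.
have -> : [set y : X | 1 < #|[set z | h z == y]|] = [set h z | z in orb y0].
  apply/setP=> y; rewrite inE; apply/idP/imsetP.
    case/card_gt1P=> a [b [Ha Hb Hab]]; rewrite !inE in Ha Hb.
    have [Hay|Hay] := boolP (a \in O).
      case/orbP: Hay Ha => i -> /eqP <-; exists (shift i y0); first exact: orb_shift.
      by rewrite !Hh hx0y0.
    have [Hby|Hby] := boolP (b \in O).
      case/orbP: Hby Hb => i -> /eqP <-; exists (shift i y0); first exact: orb_shift.
      by rewrite !Hh hx0y0.
    by move: Hab; rewrite (inj_out Hay Hby) ?eqxx // (eqP Ha) (eqP Hb).
  case=> z /orbP [i ->] ->; apply/card_gt1P; exists (shift i y0), (shift i x0).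
  rewrite !inE !Hh hx0y0 eqxx; split=> //.
  apply/negP=> /eqP E; move: Hy0; rewrite -(orb_shift_in i) E orb_shift.
  done.
rewrite card_in_imset // => u v Hu Hv; apply: inj_out; apply: orb_disj Hy0 _ => //.
Qed.

End Lower.


Definition W (V : {set cmap N A}) := fun h : cmap N A => is_ICA h \/ h \in V.

Lemma sgen_equiv (V : {set cmap N A}) : (forall v, v \in V -> is_CA v) ->
  forall f, sgen (W V) f -> equiv f.
Proof.
move=> HV f; elim=> [g [/ICA_equiv [] //|/HV /CA_equiv //]|g k _ H1 _ H2].
exact: equiv_comp.
Qed.

Lemma sgen_fact (V : {set cmap N A}) : (forall v, v \in V -> is_CA v) ->
  forall f, sgen (W V) f -> injective f \/
  exists (h u : cmap N A) (a : X -> X), [/\ h \in V, ~~ injectiveb h, equiv u, injective u &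
     forall x, f x = a (h (u x))].
Proof.
move=> HV f; elim=> [g [HI|Hg]|g k Hg H1 Hk H2].
    by left; case/ICA_equiv: HI.
  case: (boolP (injectiveb g)) => [/injectiveP|Hn]; first by left.
  right; exists g, (cid N A), id; split=> //.
  - by move=> i x; rewrite /cid !ffunE.
  - by move=> x y; rewrite /cid !ffunE.
  - by move=> x; rewrite /cid ffunE.
case: H1 => [Ig|[h [u [a [Hh Hn Hu Iu Ha]]]]]; last first.
  right; exists h, u, (fun y => k (a y)); split=> // x.
  by rewrite ccompE Ha.
case: H2 => [Ik|[h [u [a [Hh Hn Hu Iu Ha]]]]].
  by left=> x y; rewrite !ccompE => /Ik /Ig.
right; exists h, (ccomp g u), a; split=> //.
- exact: equiv_comp (sgen_equiv HV Hg) Hu.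
- by move=> x y; rewrite !ccompE => /Iu /Ig.
- by move=> x; rewrite ccompE Ha ccompE.
Qed.

Lemma lower_type (V : {set cmap N A}) : (forall v, v \in V -> is_CA v) ->
  generates (@is_CA N A) (@is_ICA N A) V ->
  forall x0 y0, y0 \notin orb x0 -> stabsub x0 y0 ->
  exists2 h, h \in V & inv1 h = per x0 /\ inv2 h = per y0.
Proof.
move=> HV Hgen x0 y0 Hy0 Hs.
have HCA : is_CA (OM x0 y0) by apply/CA_equiv; exact: OM_equiv.
have := sgen_fact HV ((Hgen _).1 HCA); case.
  move=> Hi; exfalso.
  have Hx : x0 != y0 by apply/negP=> /eqP E; move: Hy0; rewrite -E orb_self.
  move/eqP: Hx; apply; apply: Hi.
  by rewrite -[X in OM _ _ X = _](shift0 x0) OM_in // shift0 OM_out.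
move=> [h [u [a [Hh Hn Hu Iu Ha]]]].
pose h' : cmap N A := [ffun x => h (u x)].
have h'E x : h' x = h (u x) by rewrite ffunE.
have Hh' : equiv h'.
  by move=> g x; rewrite !h'E Hu; have /CA_equiv := HV _ Hh; apply.
have Hni : exists a b, a != b /\ h' a = h' b.
  case/injectivePn: Hn => a1 [b1 Hab Heq].
  exists (invF Iu a1), (invF Iu b1); rewrite !h'E !f_invF; split=> //.
  by apply: contra Hab => /eqP /(congr1 u); rewrite !f_invF => ->.
have HK : forall a b, h' a = h' b -> OM x0 y0 a = OM x0 y0 b.
  by move=> a1 b1; rewrite !h'E !Ha => ->.
exists h => //.
have E1 : inv1 h' = inv1 h.
  rewrite /inv1; have -> // : [set h' z | z : X] = [set h z | z : X].
  apply/setP=> y; apply/imsetP/imsetP => [[z _ ->]|[z _ ->]]; first by exists (u z); rewrite ?h'E.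
  by exists (invF Iu z); rewrite ?h'E ?f_invF.
have E2 : inv2 h' = inv2 h.
  rewrite /inv2; apply: eq_card => y; rewrite !inE.
  have -> : [set z | h' z == y] = u @^-1: [set z | h z == y].
    by apply/setP=> z; rewrite !inE h'E.
  by rewrite card_preimset.
rewrite -E1 -E2; split; [exact: inv1_val Hy0 Hs Hh' Hni HK | exact: inv2_val Hy0 Hs Hh' Hni HK].
Qed.


Lemma surj_inj (f : X -> X) : (forall y, exists x, f x = y) -> injective f.
Proof.
move=> Hs x y; have : {in {: X} &, injective f}; last by apply.
apply/image_injP; rewrite -imset_card.
have -> : [set f x | x in {: X}] = [set: X].
  by apply/setP=> z; rewrite inE; case: (Hs z) => w <-; apply: imset_f.
by rewrite cardsT.
Qed.

Lemma decomp (V : {set cmap N A}) :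
  (forall x y, y \notin orb x -> stabsub x y -> sgen (W V) (OM x y)) ->
  forall f, equiv f -> sgen (W V) f.
Proof.
move=> HE f.
move Hk : #|[set x | f x != x]| => k; elim: k {-2}k (leqnn k) f Hk => [|k IH].
  move=> k; rewrite leqn0 => /eqP -> f Hc Hf; apply: sgen_base; left.
  apply/ICA_equiv; split=> // x y; suff Hid : forall z, f z = z by rewrite !Hid.
  move=> z; apply/eqP/negP=> /negP Hz.
  by move/eqP: Hc; rewrite cards_eq0 => /eqP /setP /(_ z); rewrite !inE Hz.
move=> j Hj f Hc Hf.
case: (boolP (injectiveb f)) => [/injectiveP Hi|Hn].
  by apply: sgen_base; left; apply/ICA_equiv.
have [z Hz] : exists z, forall x, f x != z.
  case: (boolP [exists z, [forall x, f x != z]]) => [/existsP [z /forallP Hz]|H].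
    by exists z.
  case/injectivePn: Hn => a [b Hab Heq]; exfalso; move: Hab; rewrite (surj_inj _ Heq) ?eqxx //.
  move=> y; case: (boolP [exists x, f x == y]) => [/existsP [x /eqP Hx]|Hy]; first by exists x.
  by case/negP: H; apply/existsP; exists y; apply/forallP=> x; apply: contra Hy => Hx; apply/existsP; exists x.
have Hnotin w : f w \notin orb z.
  apply/negP=> /orb_sym /orbP [g Hg]; move: (Hz (shift g w)); rewrite Hf -Hg eqxx.
  done.
pose g : cmap N A := [ffun w => if w \in orb z then w else f w].
have gE w : g w = if w \in orb z then w else f w by rewrite ffunE.
have Hg : equiv g by move=> i w; rewrite !gE orb_shift_in; case: ifP => // _; rewrite Hf.
have Hs : stabsub z (f z) by move=> i Hi; rewrite -Hf Hi.
have -> : f = ccomp g (OM z (f z)).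
  apply/ffunP=> w; rewrite ccompE gE; case: ifP => [/orbP [i ->]|Hw].
    by rewrite OM_in // Hf.
  by rewrite OM_out // Hnotin.
apply: sgen_comp; last by apply: HE.
apply: (IH #|[set x | g x != x]|) (erefl _) Hg.
rewrite -ltnS; apply: leq_trans Hj; rewrite -Hc; apply: proper_card.
apply/properP; split.
  apply/subsetP=> x; rewrite !inE gE; case: ifP => //; by rewrite eqxx.
exists z; rewrite !inE ?gE; last by rewrite orb_self eqxx.
apply/negP=> /eqP Ez; move: (Hnotin z); rewrite Ez orb_self.
done.
Qed.

Lemma per_inj (u : cmap N A) x : equiv u -> injective u -> per (u x) = per x.
Proof.
move=> Hu Iu; apply: per_uniq (per_gt0 x) _ => k.
by rewrite -Hu (inj_eq Iu) per_dvd.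
Qed.

Lemma build_unit x0 y0 x y : y0 \notin orb x0 -> y \notin orb x ->
  per x0 = per x -> per y0 = per y ->
  exists u : cmap N A, [/\ equiv u, injective u, u x0 = x & u y0 = y].
Proof.
move=> H0 H1 Px Py.
have S1 : stabsub x0 x by apply/stabsub_per; rewrite Px.
have S2 : stabsub x x0 by apply/stabsub_per; rewrite Px.
set u1 := Sw x0 x.
have E1 := Sw_equiv S1 S2; have I1 := Sw_inj S1 S2.
set y1 := u1 y0.
have Py1 : per y1 = per y by rewrite per_inj.
have Hy1 : y1 \notin orb x.
  apply/negP=> /orbP [g Hg]; move: H0; rewrite -(Sw_a S1) -/u1 in Hg.
  by rewrite -E1 in Hg; rewrite (I1 _ _ Hg) orb_shift.
have S3 : stabsub y1 y by apply/stabsub_per; rewrite Py1.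
have S4 : stabsub y y1 by apply/stabsub_per; rewrite Py1.
exists (ccomp u1 (Sw y1 y)); split.
- exact: equiv_comp E1 (Sw_equiv S3 S4).
- by move=> a b; rewrite !ccompE => /(Sw_inj S3 S4) /I1.
- rewrite ccompE Sw_a // Sw_out //.
    by apply: contra Hy1 => /orb_sym.
  by apply: contra H1 => /orb_sym.
- by rewrite ccompE Sw_a.
Qed.

Lemma OM_conj x0 y0 x y (u : cmap N A) : equiv u -> injective u -> u x0 = x -> u y0 = y ->
  stabsub x0 y0 -> stabsub x y -> forall z, OM x y (u z) = u (OM x0 y0 z).
Proof.
move=> Hu Iu Ex Ey S0 S z; case Hz: (z \in orb x0).
  by case/orbP: Hz => k ->; rewrite Hu Ex !OM_in // Hu Ey.
rewrite !OM_out ?Hz //; apply/negP=> /orbP [k Hk].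
by move: Hz; rewrite -Ex -Hu in Hk; rewrite (Iu _ _ Hk) orb_shift.
Qed.


Definition goodp (st : 'I_N.+1 * 'I_N.+1) (p : X * X) :=
  [&& p.2 \notin orb p.1, per p.2 %| per p.1, per p.1 == st.1 & per p.2 == st.2].

Definition T : {set 'I_N.+1 * 'I_N.+1} := [set st | [exists p, goodp st p]].

Definition ebar st : cmap N A :=
  if [pick p | goodp st p] is Some p then OM p.1 p.2 else cid N A.

Definition V0 : {set cmap N A} := [set ebar st | st in T].

Lemma V0_CA v : v \in V0 -> is_CA v.
Proof.
case/imsetP=> st _ ->; apply/CA_equiv; rewrite /ebar; case: pickP => [p /and4P [_ H _ _]|_].
  by apply: OM_equiv; apply/stabsub_per.
by move=> g x; rewrite /cid !ffunE.
Qed.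

Lemma inordK' (k : nat) : k <= N -> nat_of_ord (inord k : 'I_N.+1) = k.
Proof. by move=> H; rewrite inordK // ltnS. Qed.

Lemma V0_gen : generates (@is_CA N A) (@is_ICA N A) V0.
Proof.
move=> f; split; last by move/(sgen_equiv V0_CA)/CA_equiv.
move/CA_equiv; apply: decomp => x y Hy Hs.
set st := ((inord (per x) : 'I_N.+1), (inord (per y) : 'I_N.+1)).
have Hg : goodp st (x, y).
  have Hd : per y %| per x by apply/stabsub_per.
  by rewrite /goodp /= Hy Hd !inordK' ?per_le ?eqxx.
have Hst : st \in T by rewrite inE; apply/existsP; exists (x, y).
have : ebar st \in V0 by apply: imset_f.
rewrite /ebar; case: pickP => [[x0 y0] /and4P [/= H0 Hd /eqP P1 /eqP P2]|/(_ (x, y))]; last by rewrite Hg.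
move=> Hin; have {}Hin : sgen (W V0) (OM x0 y0) by apply: sgen_base; right.
have [u [Hu Iu Ex Ey]] := build_unit H0 Hy
  (etrans P1 (inordK' (per_le x))) (etrans P2 (inordK' (per_le y))).
have Hs0 : stabsub x0 y0 by apply/stabsub_per.
pose v : cmap N A := [ffun w => invF Iu w].
have vE w : v w = invF Iu w by rewrite ffunE.
have Iv : injective v by move=> a b; rewrite !vE => /(congr1 u); rewrite !f_invF.
have Hv : equiv v by move=> g w; apply: (Iu); rewrite Hu !vE !f_invF.
have -> : OM x y = ccomp (ccomp v (OM x0 y0)) u.
  apply/ffunP=> w; rewrite !ccompE -(OM_conj Hu Iu Ex Ey Hs0 Hs) vE f_invF.
  done.
apply: sgen_comp; [apply: sgen_comp => // | ]; apply: sgen_base; left; exact/ICA_equiv.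
Qed.

Lemma V0_card : #|V0| <= #|T|.
Proof. exact: leq_imset_card. Qed.

Lemma T_lower (V : {set cmap N A}) : (forall v, v \in V -> is_CA v) ->
  generates (@is_CA N A) (@is_ICA N A) V -> #|T| <= #|V|.
Proof.
move=> HV Hgen.
pose phi (h : cmap N A) : 'I_N.+1 * 'I_N.+1 := (inord (inv1 h), inord (inv2 h)).
apply: leq_trans (leq_imset_card phi V); apply: subset_leq_card.
apply/subsetP=> st; rewrite inE => /existsP [[x y] /and4P [/= H0 Hd /eqP P1 /eqP P2]].
have [h Hh [E1 E2]] := lower_type HV Hgen H0 (iffRL (stabsub_per _ _) Hd).
apply/imsetP; exists h => //; rewrite /phi E1 E2 P1 P2.
by case: st {P1 P2} => a b /=; rewrite !inord_val.
Qed.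

Lemma rank_T : relative_rank_is (@is_CA N A) (@is_ICA N A) #|T|.
Proof.
split.
  exists V0; split; first exact: V0_CA; split; first exact: V0_gen.
  by apply/eqP; rewrite eqn_leq V0_card (T_lower V0_CA V0_gen).
by move=> V HV Hgen; exact: T_lower.
Qed.


Lemma valD (h g : G) : nat_of_ord (h + g)%R = (nat_of_ord h + nat_of_ord g) %% N.
Proof. by []. Qed.

Lemma val_addn (h : G) k : nat_of_ord (h + k%:R)%R = (nat_of_ord h + k) %% N.
Proof. by rewrite valD val_Zp_nat // modnDmr. Qed.

Lemma val1 : nat_of_ord ((1%:R)%R : G) = 1.
Proof. by rewrite val_Zp_nat // modn_small. Qed.

Lemma dvd_modN d k : d %| N -> (d %| k %% N) = (d %| k).
Proof. by move=> H; rewrite /dvdn (modn_dvdm _ H). Qed.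

Definition pat (d : nat) (a b : A) : X := [ffun h => if d %| nat_of_ord h then a else b].
Definition pat2 (d : nat) (a b : A) : X := [ffun h => if nat_of_ord h %% d < 2 then a else b].

Lemma per_pat d a b : d %| N -> a != b -> per (pat d a b) = d.
Proof.
move=> Hd Hab; have d0 : 0 < d by apply: dvdn_gt0 Hd.
apply: per_uniq d0 _ => k; apply/eqP/idP.
  move/ffunP/(_ 0%R); rewrite shiftE !ffunE val_addn add0n dvd_modN // dvdn0.
  by case: ifP => // _ E; move: Hab; rewrite E eqxx.
move=> Hk; apply/ffunP=> h; rewrite shiftE !ffunE val_addn dvd_modN //.
by rewrite dvdn_addl.
Qed.

Lemma per_pat2 d a b : d %| N -> 2 < d -> a != b -> per (pat2 d a b) = d.
Proof.
move=> Hd d2 Hab; have d0 : 0 < d by apply: dvdn_gt0 Hd.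
apply: per_uniq d0 _ => k; apply/eqP/idP.
  move/ffunP=> H; have H0 := H 0%R; have H1 := H (1%:R)%R.
  rewrite shiftE !ffunE val_addn add0n (modn_dvdm _ Hd) /= in H0.
  rewrite shiftE !ffunE val_addn val1 (modn_dvdm _ Hd) /= in H1.
  have E0 : k %% d < 2.
    move: H0; case: ifP => // _; rewrite mod0n /= => E; by move: Hab; rewrite E eqxx.
  have E1 : (1 + k) %% d < 2.
    move: H1; case: ifP => // _; rewrite (modn_small (ltnW d2)) /= => E; by move: Hab; rewrite E eqxx.
  rewrite /dvdn; move: E0 E1; rewrite -modnDmr.
  case: (k %% d) => [//|[|//]] _; rewrite modn_small //.
move=> Hk; apply/ffunP=> h; rewrite shiftE !ffunE val_addn (modn_dvdm _ Hd).
by rewrite -modnDmr (eqP Hk) addn0.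
Qed.

Lemma notin_per x y : per y != per x -> y \notin orb x.
Proof. by apply: contra => /orbP [g ->]; rewrite per_shift. Qed.

Lemma two_cases (a b w : A) : #|A| = 2 -> a != b -> w = a \/ w = b.
Proof.
move=> HA Hab; case: (eqVneq w a) => [|Hwa]; first by left.
case: (eqVneq w b) => [|Hwb]; first by right.
have : #|w |: [set a; b]| <= #|A| by apply: max_card.
rewrite cardsU1 cards2 Hab !inE negb_or Hwa Hwb HA.
done.
Qed.

Lemma par (x : X) : shift (2%:R)%R x = x -> forall j, x (j%:R)%R = if odd j then x (1%:R)%R else x 0%R.
Proof.
move=> H2.
suff : forall j, x (j%:R)%R = (if odd j then x (1%:R)%R else x 0%R) /\
                 x (j.+1%:R)%R = (if odd j.+1 then x (1%:R)%R else x 0%R) by move=> W j; case: (W j).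
elim=> [|j [Hj IH]]; first by split.
split=> //; have E := congr1 (fun y : X => y (j%:R)%R) H2; rewrite /= shiftE -natrD addn2 in E.
by rewrite E Hj /= negbK.
Qed.


Lemma per2_facts (x : X) : per x = 2 ->
  shift (2%:R)%R x = x /\ x 0%R != x (1%:R)%R.
Proof.
move=> Px; have H2 : shift (2%:R)%R x = x by apply/eqP; rewrite per_dvd Px.
split=> //; apply/negP=> /eqP Hc.
have : (shift (1%:R)%R x == x) = false by rewrite per_dvd Px.
have -> : shift (1%:R)%R x = x.
  apply/ffunP=> h; rewrite shiftE -[h](natZ h) -natrD (par H2 (_ + 1)) (par H2 (nat_of_ord h)).
  by rewrite addn1 /= Hc; case: odd.
by rewrite eqxx.
Qed.

Lemma q2 x y : #|A| = 2 -> per x = 2 -> per y = 2 -> y \in orb x.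
Proof.
move=> HA Px Py; have [Hx Dx] := per2_facts Px; have [Hy Dy] := per2_facts Py.
apply/orbP; case: (eqVneq (y 0%R) (x 0%R)) => Hu.
  exists 0%R; rewrite shift0; apply/ffunP=> h; rewrite -[h](natZ h) (par Hx (nat_of_ord h)) (par Hy (nat_of_ord h)).
  case: (two_cases (y (1%:R)%R) HA Dx) => Hv.
    by move: Dy; rewrite Hu Hv eqxx.
  by rewrite Hu Hv.
have Hu' : y 0%R = x (1%:R)%R by case: (two_cases (y 0%R) HA Dx) => // E; move: Hu; rewrite E eqxx.
have Hv' : y (1%:R)%R = x 0%R.
  case: (two_cases (y (1%:R)%R) HA Dx) => // E; by move: Dy; rewrite E Hu' eqxx.
exists (1%:R)%R; apply/ffunP=> h; rewrite shiftE -[h](natZ h) -natrD (par Hx (_ + 1)) (par Hy (nat_of_ord h)).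
by rewrite addn1 /= Hu' Hv'; case: odd.
Qed.


Lemma T_char (st : 'I_N.+1 * 'I_N.+1) : 1 < #|A| ->
  (st \in T) = [&& st.1 %| N, st.2 %| N, st.2 %| st.1 &
                ~~ [&& #|A| == 2, nat_of_ord st.1 == 2 & nat_of_ord st.2 == 2]].
Proof.
move=> HA; rewrite inE; apply/existsP/idP.
  case=> [[x y] /and4P [/= H0 Hd /eqP P1 /eqP P2]].
  rewrite -P1 -P2 !per_N Hd /=; apply/negP=> /and3P [/eqP HA2 /eqP E1 /eqP E2].
  by move: H0; rewrite q2.
case: st => s t /and4P [/= Hs Ht Hts Hex].
have [a [b [_ _ Hab]]] := card_gt1P HA.
have s0 : 0 < s by apply: dvdn_gt0 Hs.
case: (eqVneq (nat_of_ord t) (nat_of_ord s)) => Est.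
- case: (ltngtP (nat_of_ord s) 2) => Hs2.
  + have Es1 : nat_of_ord s = 1 by move: s0 Hs2; case: (nat_of_ord s) => [|[|]].
    exists (pat 1 a b, pat 1 b a); rewrite /goodp /= !per_pat ?dvd1n // 1?eq_sym //.
    rewrite Est Es1 !eqxx /= andbT.
    apply/orbP=> [[g /ffunP /(_ 0%R)]]; rewrite shiftE !ffunE !dvd1n => E.
    by move: Hab; rewrite E eqxx.
  + have Hs3 : 2 < s by [].
    exists (pat s a b, pat2 s a b); rewrite /goodp /= per_pat // per_pat2 // Est !eqxx dvdnn /= andbT.
    apply/orbP=> [[g /ffunP E]].
    have E0 := E 0%R; have E1 := E (1%:R)%R.
    rewrite shiftE !ffunE add0r /= in E0; rewrite shiftE !ffunE valD val1 dvd_modN // in E1.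
    rewrite mod0n (modn_small (ltnW Hs3)) /= in E0 E1.
    case: ifP E0 => [Hg _|_ /eqP]; last by rewrite (negbTE Hab).
    case: ifP E1 => [|_ /eqP]; last by rewrite (negbTE Hab).
    by rewrite dvdn_addl // => /(dvdn_leq (ltn0Sn 0)) H1; move: Hs3; rewrite ltnNge (leq_trans H1).
  + have HA3 : #|A| != 2 by move: Hex; rewrite Est Hs2 eqxx !andbT; apply.
    have [c Hc] : exists c, (c != a) && (c != b).
      case: (boolP [exists c, (c != a) && (c != b)]) => [/existsP //|Hn].
      have : #|A| <= #|[set a; b]|.
        apply: subset_leq_card; apply/subsetP=> w _; rewrite !inE.
        by apply: contraR Hn => Hw; apply/existsP; exists w; rewrite -negb_or.
      rewrite cards2 Hab => H3; move: HA3 HA; rewrite eqn_leq H3 /=.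
      by move=> /negbTE ->.
    case/andP: Hc => Hca Hcb.
    exists (pat s a b, pat s a c); rewrite /goodp /= !per_pat // 1?eq_sym // Est !eqxx dvdnn /= andbT.
    apply/orbP=> [[g /ffunP /(_ (1%:R)%R)]]; rewrite shiftE !ffunE val1 Hs2 /=.
    by case: ifP => _ E; [move: Hca | move: Hcb]; rewrite E eqxx.
- exists (pat s a b, pat t a b); rewrite /goodp /= !per_pat // !eqxx Hts !andbT /=.
  by apply: notin_per; rewrite !per_pat.
Qed.


Definition Pset : {set 'I_N.+1 * 'I_N.+1} :=
  [set st : 'I_N.+1 * 'I_N.+1 | [&& st.1 %| N, st.2 %| N & st.2 %| st.1]].

Lemma sum_shift1 (F : nat -> nat) : F 0 = 0 ->
  \sum_(1 <= s < N.+1) F s = \sum_(s < N.+1) F s.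
Proof.
move=> F0; have -> : \sum_(s < N.+1) F s = \sum_(0 <= s < N.+1) F s by rewrite big_mkord.
by rewrite (big_ltn (ltn0Sn _)) F0 add0n. Qed.

Lemma card_Pset : #|Pset| = E N.
Proof.
rewrite /E sum_shift1; last first.
  by rewrite big1 // => t _; rewrite dvd0n.
under eq_bigr => s _ do rewrite sum_shift1 ?dvdn0 ?andbF //.
rewrite pair_bigA -sum1_card big_mkcond /=; apply: eq_bigr => st _.
by rewrite inE; case: st.
Qed.

Lemma card_T : 1 < #|A| -> #|T| = if (#|A| == 2) && ~~ odd N then E N - 1 else E N.
Proof.
move=> HA; rewrite -card_Pset.
case: ifP => [/andP [/eqP HA2 HN]|Hc].
  pose p2 : 'I_N.+1 * 'I_N.+1 := (inord 2, inord 2).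
  have Hp2 : p2 \in Pset by rewrite inE /= inordK // dvdn2 HN dvdnn.
  have -> : T = Pset :\ p2.
    apply/setP=> st; rewrite T_char // !inE HA2 eqxx /=.
    case: st => s t /=; rewrite xpair_eqE -!val_eqE /= inordK //.
    by case: ((nat_of_ord s == 2) && (nat_of_ord t == 2)); rewrite /= ?andbT ?andbF.
  by rewrite (cardsD1 p2 Pset) Hp2 add1n subSS subn0.
apply: eq_card => st; rewrite T_char // inE.
case: st => s t /=.
case: (boolP [&& #|A| == 2, nat_of_ord s == 2 & nat_of_ord t == 2]) => [/and3P [/eqP HA2 /eqP Hs _]|_]; last by rewrite andbT.
move: Hc; rewrite HA2 eqxx andTb => /negbFE HN.
by rewrite Hs dvdn2 HN.
Qed.

End S.

Theorem lemma9 (n : nat) (A : finType) :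
  (2 <= n)%N -> (2 <= #|A|)%N ->
  relative_rank_is (@is_CA n A) (@is_ICA n A)
    (if (#|A| == 2%N) && ~~ odd n then (E n - 1)%N else E n).
Proof.
case: n => [|[|m]] // _ HA.
by rewrite -card_T //; exact: rank_T.
Qed.
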